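(* Let $T$ be a decomposition tree of a distance-hereditary graph $G$, and let $v$ be an internal node of $T$ labeled $\odot$ with left child $v_l$ and right child $v_r$, such that property (P) holds at $v_l$ and at $v_r$. Then $\hat{min}(v)=\hat{min}(v_l)+\hat{min}(v_r)$.
   Context: All graphs are finite, simple, undirected. For a graph $H$ and $S\subseteq V(H)$, $N_H[S]$ is $S$ together with all vertices adjacent to a vertex of $S$, and $H[S]$ is the induced subgraph. Graphs carry a ''twin set'': a single-vertex graph on $x$ has twin set $\{x\}$. For vertex-disjoint graphs $G_l,G_r$ with twin sets $TS(G_l),TS(G_r)$: the true twin operation $G_l\otimes G_r$ has vertex set $V(G_l)\cup V(G_r)$, edge set $E(G_l)\cup E(G_r)\cup\{uw: u\in TS(G_l), w\in TS(G_r)\}$ and twin set $TS(G_l)\cup TS(G_r)$; the false twin operation $G_l\odot G_r$ has vertex set $V(G_l)\cup V(G_r)$, edge set $E(G_l)\cup E(G_r)$, twin set $TS(G_l)\cup TS(G_r)$; the attachment operation $G_l\oplus G_r$ has the same vertex and edge sets as $G_l\otimes G_r$ and twin set $TS(G_l)$. A decomposition tree $T$ of $G$ is a rooted binary tree whose leaves are in bijection with $V(G)$, each internal node having a left and a right child and a label in $\{\otimes,\odot,\oplus\}$; for each node $v$ define $\hat G(v)$ and $\hat{TS}(v)$ recursively: for a leaf $x$, the single-vertex graph on $x$ with twin set $\{x\}$; for an internal node $v$ with label $\circ$ and children $v_l,v_r$, $\hat G(v)=\hat G(v_l)\circ\hat G(v_r)$ with the corresponding twin set; one requires $\hat G(\text{root})=G$.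 Then $\hat G(v)$ is the subgraph of $G$ induced by the set $\hat V(v)$ of leaves below $v$. For a node $u$ and $0\le k\le|\hat{TS}(u)|$, call $S\subseteq\hat V(u)$ $k$-feasible if $\hat V(u)\setminus\hat{TS}(u)\subseteq N_{\hat G(u)}[S]$ and there is $X\subseteq S\cap\hat{TS}(u)$ with $|X|=k$ such that $\hat G(u)[S\setminus X]$ has a perfect matching. $\hat\gamma_k(u)$ is the minimum size of a $k$-feasible set. $\hat{min}(u)=\min\{\hat\gamma_k(u):0\le k\le|\hat{TS}(u)|\}$, and $\hat\alpha(u)$, $\hat\beta(u)$ are the smallest and the largest $k$ with $\hat\gamma_k(u)=\hat{min}(u)$. Property (P) holds at $u$ if for every $0\le k\le|\hat{TS}(u)|$: $\hat\gamma_k(u)=\hat{min}(u)+\hat\alpha(u)-k$ when $k\le\hat\alpha(u)$; $\hat\gamma_k(u)=\hat{min}(u)+k-\hat\beta(u)$ when $k\ge\hat\beta(u)$; $\hat\gamma_k(u)=\hat{min}(u)$ when $\hat\alpha(u)<k<\hat\beta(u)$ and $k-\hat\alpha(u)$ is even; and $\hat\gamma_k(u)=\hat{min}(u)+1$ otherwise. *)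

(* Defs.v *)
From mathcomp Require Import all_boot.
Set Implicit Arguments. Unset Strict Implicit. Unset Printing Implicit Defensive.

(* Labels: otrue = true twin (⊗), ofalse = false twin (⊙), oattach = attachment (⊕). *)
Inductive op := otrue | ofalse | oattach.

Definition op_eqb (a b : op) : bool :=
  match a, b with
  | otrue, otrue | ofalse, ofalse | oattach, oattach => true
  | _, _ => false
  end.

Inductive dtree (V : Type) :=
| Leaf of V
| Node of op & dtree V & dtree V.
Arguments Leaf {V} _.
Arguments Node {V} _ _ _.

Section DT.
Variable V : finType.

Fixpoint vset (t : dtree V) : {set V} :=
  match t with
  | Leaf x => [set x]
  | Node _ l r => vset l :|: vset r
  end.

Fixpoint ts (t : dtree V) : {set V} :=
  match t with
  | Leaf x => [set x]
  | Node oattach l _ => ts l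
  | Node _ l r => ts l :|: ts r
  end.

Fixpoint edges (t : dtree V) : rel V :=
  match t with
  | Leaf _ => fun _ _ => false
  | Node o l r => fun x y =>
      [|| edges l x y, edges r x y
        | ~~ op_eqb o ofalse &&
          (((x \in ts l) && (y \in ts r)) || ((y \in ts l) && (x \in ts r)))]
  end.

Fixpoint wf_tree (t : dtree V) : Prop :=
  match t with
  | Leaf _ => True
  | Node _ l r => [/\ wf_tree l, wf_tree r & [disjoint vset l & vset r]]
  end.

Inductive subtree : dtree V -> dtree V -> Prop :=
| sub_refl t : subtree t t
| sub_l o l r t : subtree t l -> subtree t (Node o l r)
| sub_r o l r t : subtree t r -> subtree t (Node o l r).

(* t is a decomposition tree of the graph (V, e): leaves in bijection with V
   and \hat G(root) = G. *)
Definition is_dtree (e : rel V) (t : dtree V) : Prop :=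
  [/\ wf_tree t, vset t = setT & forall x y, e x y = edges t x y].

Definition cnbhd (u : dtree V) (S : {set V}) : {set V} :=
  [set x in vset u | (x \in S) || [exists y in S, edges u x y]].

Definition perfect_matching (u : dtree V) (W : {set V}) (M : {set {set V}}) : bool :=
  [forall m in M, [exists x, exists y,
      [&& x \in W, y \in W, x != y, edges u x y & m == [set x; y]]]] &&
  [forall x in W, #|[set m in M | x \in m]| == 1].

Definition has_pm (u : dtree V) (W : {set V}) : bool :=
  [exists M : {set {set V}}, perfect_matching u W M].

Definition kfeasible (u : dtree V) (k : nat) (S : {set V}) : bool :=
  [&& S \subset vset u,
      (vset u :\: ts u) \subset cnbhd u S &
      [exists X : {set V},
         [&& X \subset S :&: ts u, #|X| == k & has_pm u (S :\: X)]]].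

(* \hat\gamma_k(u); None encodes +infinity (no k-feasible set) *)
Definition gamma (u : dtree V) (k : nat) : option nat :=
  if [exists S, kfeasible u k S]
  then Some (\big[minn/#|V|.+1]_(S : {set V} | kfeasible u k S) #|S|)
  else None.

(* \hat{min}(u) = min_{0<=k<=|TS(u)|} \hat\gamma_k(u)  (infinity read as #|V|.+1,
   which exceeds every finite value) *)
Definition hmin (u : dtree V) : nat :=
  \big[minn/#|V|.+1]_(k < #|ts u|.+1) odflt #|V|.+1 (gamma u k).

Definition halpha (u : dtree V) : nat :=
  \big[minn/#|ts u|.+1]_(k < #|ts u|.+1 | gamma u k == Some (hmin u)) (k : nat).

Definition hbeta (u : dtree V) : nat :=
  \big[maxn/0]_(k < #|ts u|.+1 | gamma u k == Some (hmin u)) (k : nat).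

Definition propP (u : dtree V) : Prop :=
  forall k, k <= #|ts u| ->
    [/\ k <= halpha u -> gamma u k = Some (hmin u + halpha u - k),
        hbeta u <= k -> gamma u k = Some (hmin u + k - hbeta u),
        halpha u < k < hbeta u -> ~~ odd (k - halpha u) -> gamma u k = Some (hmin u)
      & halpha u < k < hbeta u -> odd (k - halpha u) -> gamma u k = Some (hmin u).+1].

End DT.

(* Main.v *)
Require Import Defs.
From mathcomp Require Import all_boot.
Set Implicit Arguments. Unset Strict Implicit. Unset Printing Implicit Defensive.

Section L.
Variable V : finType.
Implicit Types (u a b l r : dtree V).

Lemma ts_sub u : ts u \subset vset u.
Proof.
elim: u => [x|o l IHl r IHr] /=; first by [].
case: o => /=; rewrite ?setUSS //.
exact: subset_trans IHl (subsetUl _ _).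
Qed.

Lemma edges_vset u x y : edges u x y -> (x \in vset u) && (y \in vset u).
Proof.
elim: u => [z|o l IHl r IHr] //=; rewrite !inE.
case/or3P=> [/IHl/andP[-> ->]//|/IHr/andP[-> ->]|/andP[_ /orP[]/andP[Hx Hy]]];
  rewrite ?orbT //.
- by rewrite (subsetP (ts_sub l) _ Hx) (subsetP (ts_sub r) _ Hy) orbT.
- by rewrite (subsetP (ts_sub l) _ Hx) (subsetP (ts_sub r) _ Hy) orbT.
Qed.

Lemma wf_sub (t T : dtree V) : subtree t T -> wf_tree T -> wf_tree t.
Proof. by elim=> // o l r t' _ IH /= [*]; apply: IH. Qed.

Lemma pm_sub u (W : {set V}) (M : {set {set V}}) m : perfect_matching u W M -> m \in M -> m \subset W.
Proof.
case/andP=> /forallP H1 _ mM; have := H1 m; rewrite mM /=.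
case/existsP=> x /existsP[y /and5P[xW yW _ _ /eqP ->]].
by apply/subsetP=> z; rewrite !inE => /orP[]/eqP->.
Qed.


Lemma pm_split u a b (W : {set V}) (M : {set {set V}}) :
  (forall x y, edges u x y = edges a x y || edges b x y) ->
  [disjoint vset a & vset b] -> perfect_matching u W M ->
  perfect_matching a (W :&: vset a) [set m in M | m \subset vset a].
Proof.
move=> Eu dis /andP[/forallP H1 /forallP H2]; apply/andP; split.
  apply/forallP => m; apply/implyP; rewrite inE => /andP[mM msub].
  have := H1 m; rewrite mM /= => /existsP[x /existsP[y /and5P[xW yW xy exy /eqP mE]]].
  have xa: x \in vset a by apply: (subsetP msub); rewrite mE !inE eqxx.
  have ya: y \in vset a by apply: (subsetP msub); rewrite mE !inE eqxx orbT.
  apply/existsP; exists x; apply/existsP; exists y.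
  rewrite !inE xW yW xa ya xy mE eqxx /= andbT.
  move: exy; rewrite Eu => /orP[//|/edges_vset/andP[xb _]].
  by rewrite (disjointFr dis xa) in xb.
apply/forallP => x; apply/implyP; rewrite inE => /andP[xW xa].
have := H2 x; rewrite xW /=.
suff ->: [set m in [set m in M | m \subset vset a] | x \in m] = [set m in M | x \in m] by [].
apply/setP => m; rewrite !inE.
case mM: (m \in M) => //=; case xm: (x \in m); rewrite ?andbF ?andbT //.
have := H1 m; rewrite mM /= => /existsP[p /existsP[q /and5P[_ _ _ epq /eqP mE]]].
move: epq; rewrite Eu => /orP[/edges_vset/andP[pa qa]|/edges_vset/andP[pb qb]].
  by apply/subsetP => z; rewrite mE !inE => /orP[]/eqP->.
move: xm; rewrite mE !inE => /orP[]/eqP xE; subst x.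
  by rewrite (disjointFr dis xa) in pb.
by rewrite (disjointFr dis xa) in qb.
Qed.

Lemma pm_merge u a b (Wa Wb : {set V}) (Ma Mb : {set {set V}}) :
  (forall x y, edges u x y = edges a x y || edges b x y) ->
  [disjoint vset a & vset b] -> Wa \subset vset a -> Wb \subset vset b ->
  perfect_matching a Wa Ma -> perfect_matching b Wb Mb ->
  perfect_matching u (Wa :|: Wb) (Ma :|: Mb).
Proof.
move=> Eu dis sa sb pa pb.
have [/forallP Ha1 /forallP Ha2] := andP pa.
have [/forallP Hb1 /forallP Hb2] := andP pb.
apply/andP; split.
  apply/forallP => m; apply/implyP; rewrite inE => /orP[mM|mM].
    have := Ha1 m; rewrite mM /= => /existsP[x /existsP[y /and5P[xW yW xy exy mE]]].
    by apply/existsP; exists x; apply/existsP; exists y; rewrite !inE xW yW xy Eu exy mE.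
  have := Hb1 m; rewrite mM /= => /existsP[x /existsP[y /and5P[xW yW xy exy mE]]].
  by apply/existsP; exists x; apply/existsP; exists y; rewrite !inE xW yW xy Eu exy mE !orbT.
apply/forallP => x; apply/implyP; rewrite inE => /orP[xW|xW].
  have := Ha2 x; rewrite xW /=.
  suff ->: [set m in Ma :|: Mb | x \in m] = [set m in Ma | x \in m] by [].
  apply/setP => m; rewrite !inE; case mM: (m \in Mb); rewrite ?orbF //=.
  case xm: (x \in m); rewrite ?andbF ?andbT //.
  have xb := subsetP sb x (subsetP (pm_sub pb mM) x xm).
  by rewrite (disjointFr dis (subsetP sa x xW)) in xb.
have := Hb2 x; rewrite xW /=.
suff ->: [set m in Ma :|: Mb | x \in m] = [set m in Mb | x \in m] by [].
apply/setP => m; rewrite !inE; case mM: (m \in Ma); rewrite ?orbF //=.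
case xm: (x \in m); rewrite ?andbF ?andbT //.
have xa := subsetP sa x (subsetP (pm_sub pa mM) x xm).
by move: (subsetP sb x xW); rewrite (disjointFr dis xa).
Qed.


Section Split.
Variables (u a b : dtree V).
Hypotheses (Hv : vset u = vset a :|: vset b) (Ht : ts u = ts a :|: ts b)
  (Eu : forall x y, edges u x y = edges a x y || edges b x y)
  (dis : [disjoint vset a & vset b]).

Lemma notvb x : x \in vset a -> x \in vset b = false.
Proof. by move=> xa; rewrite (disjointFr dis xa). Qed.

Lemma nottsb x : x \in vset a -> x \in ts b = false.
Proof.
move=> xa; apply/negbTE/negP => /(subsetP (ts_sub b)); by rewrite notvb.
Qed.

Lemma kf_split k S : kfeasible u k S -> exists ka, kfeasible a ka (S :&: vset a).
Proof.
case/and3P=> Su Dom /existsP[X /and3P[XS /eqP Xk /existsP[M pm]]].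
exists #|X :&: vset a|; apply/and3P; split.
- exact: subsetIr.
- apply/subsetP => x; rewrite !inE => /andP[xts xa].
  have := subsetP Dom x; rewrite !inE Hv Ht !inE xa nottsb //=.
  rewrite (negbTE xts) /= => /(_ isT).
  case/orP=> [->//|/existsP[y /andP[yS]]].
  rewrite Eu => /orP[exy|/edges_vset/andP[]]; last by rewrite notvb.
  apply/orP; right; apply/existsP; exists y; rewrite !inE yS exy.
  by have /andP[_ ->] := edges_vset exy.
- apply/existsP; exists (X :&: vset a); apply/and3P; split => //.
    apply/subsetP => x; rewrite !inE => /andP[xX xa].
    have := subsetP XS x xX; rewrite !inE Ht !inE nottsb // orbF => /andP[-> ->].
    by rewrite xa.
  apply/existsP; exists [set m in M | m \subset vset a].
  have -> : (S :&: vset a) :\: (X :&: vset a) = (S :\: X) :&: vset a.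
    by apply/setP => x; rewrite !inE; case: (x \in S); case: (x \in X); case: (x \in vset a).
  exact: pm_split.
Qed.

End Split.

Section Merge.
Variables (u a b : dtree V).
Hypotheses (Hv : vset u = vset a :|: vset b) (Ht : ts u = ts a :|: ts b)
  (Eu : forall x y, edges u x y = edges a x y || edges b x y)
  (dis : [disjoint vset a & vset b]).

Lemma kf_merge ka kb Sa Sb : kfeasible a ka Sa -> kfeasible b kb Sb ->
  kfeasible u (ka + kb) (Sa :|: Sb).
Proof.
case/and3P=> Sa_ Doma /existsP[Xa /and3P[XSa /eqP Xka /existsP[Ma pma]]].
case/and3P=> Sb_ Domb /existsP[Xb /and3P[XSb /eqP Xkb /existsP[Mb pmb]]].
have disb : [disjoint vset b & vset a] by rewrite disjoint_sym.
apply/and3P; split.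
- by rewrite Hv setUSS.
- apply/subsetP => x; rewrite !inE Hv Ht !inE negb_or => /andP[/andP[xta xtb] /orP[xa|xb]].
    have := subsetP Doma x; rewrite !inE xa xta /= => /(_ isT).
    case/orP=> [->//|/existsP[y /andP[yS exy]]].
    by apply/orP; right; apply/existsP; exists y; rewrite !inE yS Eu exy.
  have := subsetP Domb x; rewrite !inE xb xtb /= => /(_ isT).
  case/orP=> [->|/existsP[y /andP[yS exy]]]; first by rewrite !orbT.
  by rewrite orbT /=; apply/orP; right; apply/existsP; exists y; rewrite !inE yS Eu exy !orbT.
- apply/existsP; exists (Xa :|: Xb); apply/and3P; split.
  + apply/subsetP => x; rewrite !inE Ht !inE => /orP[/(subsetP XSa)|/(subsetP XSb)];
      rewrite !inE => /andP[-> ->]; by rewrite ?orbT.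
  + have XaS : Xa \subset vset a.
      by apply: subset_trans XSa _; apply: subset_trans (subsetIl _ _) Sa_.
    have XbS : Xb \subset vset b.
      by apply: subset_trans XSb _; apply: subset_trans (subsetIl _ _) Sb_.
    have I0 : Xa :&: Xb = set0.
      apply/setP => x; rewrite !inE; case xa: (x \in Xa) => //=.
      by apply/negbTE/negP => /(subsetP XbS); rewrite (notvb dis (subsetP XaS x xa)).
    by rewrite -Xka -Xkb -cardsUI I0 cards0 addn0.
  + apply/existsP; exists (Ma :|: Mb).
    have -> : (Sa :|: Sb) :\: (Xa :|: Xb) = (Sa :\: Xa) :|: (Sb :\: Xb).
      apply/setP => x; rewrite !inE.
      case xa: (x \in Sa).
        have xva := subsetP Sa_ x xa.
        have -> : x \in Sb = false by apply/negbTE/negP => /(subsetP Sb_); rewrite (notvb dis xva).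
        have -> : x \in Xb = false.
          apply/negbTE/negP => /(subsetP XSb); rewrite inE => /andP[/(subsetP Sb_)].
          by rewrite (notvb dis xva).
        by rewrite !orbF !andbT.
      case xb: (x \in Sb) => //=; rewrite ?andbF //.
      have xvb := subsetP Sb_ x xb.
      have -> : x \in Xa = false.
        apply/negbTE/negP => /(subsetP XSa); rewrite inE => /andP[/(subsetP Sa_)].
        by rewrite (notvb disb xvb).
      by [].
    apply: (pm_merge Eu dis _ _ pma pmb).
      by apply: subset_trans (subsetDl _ _) Sa_.
    by apply: subset_trans (subsetDl _ _) Sb_.
Qed.

End Merge.


Lemma min_attained (I : finType) (P : pred I) (F : I -> nat) x :
  \big[minn/x]_(i | P i) F i = x \/ exists2 i, P i & \big[minn/x]_(i | P i) F i = F i.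
Proof.
apply: (big_ind (fun y => y = x \/ exists2 i, P i & y = F i)); first by left.
  move=> a b Ka Kb /=; case: (leqP a b) => h.
    by [].
  by [].
by move=> i Pi; right; exists i.
Qed.

Lemma bigmin_le (I : finType) (P : pred I) (F : I -> nat) x i :
  P i -> \big[minn/x]_(j | P j) F j <= F i.
Proof.
move=> Pi; have : i \in index_enum I by rewrite mem_index_enum.
elim: (index_enum I) => // j s IH; rewrite inE big_cons.
case/orP=> [/eqP<-|/IH h]; first by rewrite Pi geq_minl.
case: ifP => _ //; exact: leq_trans (geq_minr _ _) h.
Qed.

Lemma kf_le u k S : kfeasible u k S -> k <= #|ts u|.
Proof.
case/and3P=> _ _ /existsP[X /and3P[XS /eqP <- _]].
by apply: subset_leq_card; apply: subset_trans XS (subsetIr _ _).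
Qed.

Lemma hmin_le u k S : kfeasible u k S -> hmin u <= #|S|.
Proof.
move=> H; have kle : k < #|ts u|.+1 by rewrite ltnS (kf_le H).
rewrite /hmin.
have h := @bigmin_le _ (fun _ : 'I_#|ts u|.+1 => true) (fun k : 'I_#|ts u|.+1 => odflt #|V|.+1 (gamma u k)) #|V|.+1 (Ordinal kle) isT.
apply: leq_trans h _.
rewrite /gamma; have ex : [exists S, kfeasible u k S] by apply/existsP; exists S.
rewrite /= ex /=.
exact: (@bigmin_le _ (fun S => kfeasible u k S) (fun S : {set V} => #|S|) _ S H).
Qed.

Lemma gamma_some u k n : gamma u k = Some n -> exists S, kfeasible u k S.
Proof. by rewrite /gamma; case: existsP. Qed.

Lemma hmin_attained u k0 S0 : kfeasible u k0 S0 ->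
  exists k S, kfeasible u k S /\ #|S| = hmin u.
Proof.
move=> H; have h1 := hmin_le H; have hS : #|S0| <= #|V| := max_card _.
have hlt : hmin u < #|V|.+1 by apply: leq_ltn_trans h1 _; rewrite ltnS.
move: hlt; rewrite /hmin.
case: (min_attained (fun _ : 'I_#|ts u|.+1 => true) (fun k : 'I_#|ts u|.+1 => odflt #|V|.+1 (gamma u k)) #|V|.+1) => [->|[i _ ->]]; first by rewrite ltnn.
rewrite /gamma; case: ifP => _ /=; last by rewrite ltnn.
case: (min_attained (fun S => kfeasible u i S) (fun S : {set V} => #|S|) #|V|.+1) => [->|[S fS ->]]; first by rewrite ltnn.
by move=> _; exists i, S.
Qed.

End L.

Theorem lemma17 (V : finType) (e : rel V) (T vl vr : dtree V) :
  symmetric e -> irreflexive e ->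
  is_dtree e T ->
  subtree (Node ofalse vl vr) T ->
  propP vl -> propP vr ->
  hmin (Node ofalse vl vr) = hmin vl + hmin vr.
Proof.
move=> _ _ [wfT _ _] sub Pl Pr.
have [_ _ dis] := wf_sub sub wfT.
set v := Node ofalse vl vr.
have Hv : vset v = vset vl :|: vset vr by [].
have Ht : ts v = ts vl :|: ts vr by [].
have Eu : forall x y, edges v x y = edges vl x y || edges vr x y.
  by move=> x y /=; rewrite orbF.
have Hv' : vset v = vset vr :|: vset vl by rewrite setUC.
have Ht' : ts v = ts vr :|: ts vl by rewrite setUC.
have Eu' : forall x y, edges v x y = edges vr x y || edges vl x y.
  by move=> x y; rewrite Eu orbC.
have dis' : [disjoint vset vr & vset vl] by rewrite disjoint_sym.
have [Sl0 fl0] : exists S, kfeasible vl 0 S.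
  have [h _ _ _] := Pl 0 (leq0n _); exact: gamma_some (h (leq0n _)).
have [Sr0 fr0] : exists S, kfeasible vr 0 S.
  have [h _ _ _] := Pr 0 (leq0n _); exact: gamma_some (h (leq0n _)).
have [kl [Sl [fl El]]] := hmin_attained fl0.
have [kr [Sr [fr Er]]] := hmin_attained fr0.
have fv := kf_merge Hv Ht Eu dis fl fr.
apply/eqP; rewrite eqn_leq; apply/andP; split.
  apply: leq_trans (hmin_le fv) _; rewrite -El -Er.
  by rewrite -cardsUI leq_addr.
have [k [S [fS ES]]] := hmin_attained fv.
have [ka fa] := kf_split Hv Ht Eu dis fS.
have [kb fb] := kf_split Hv' Ht' Eu' dis' fS.
have Su : S \subset vset v by case/and3P: fS.
have I0 : (S :&: vset vl) :&: (S :&: vset vr) = set0.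
  apply/setP => x; rewrite !inE; case xa: (x \in vset vl); rewrite ?andbF //.
  by rewrite (notvb dis xa) !andbF.
have : #|S :&: vset vl| + #|S :&: vset vr| = #|S|.
  by rewrite -cardsUI I0 cards0 addn0 -setIUr (setIidPl Su).
rewrite ES => <-.
by apply: leq_add; [apply: hmin_le fa | apply: hmin_le fb].
Qed.
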